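(* Assume $\chi$ is weakly generic, let $\sigma=\sigma_{a,b}$ be a Serre weight with $\mathcal{S}(\chi_1,\chi_2,\sigma)\neq\varnothing$, let $(J,x)$ be its maximal element, and let $s,t,r,\xi$ be as in the context. Suppose $\kappa\in\Sigma$ satisfies $t_\kappa<r_\kappa$. Then $v_p(\xi_\kappa-t_\kappa(p^f-1))>1$ if and only if $e=1$ and $r_\tau=p$, $n_\tau=1$ and $t_\tau=0$ for all $\tau\in\Sigma$.
   Context: Let $p$ be a prime, $K/\mathbf{Q}_p$ finite with residue field $k$, residue degree $f$, ramification index $e$; $I_K$ inertia; $v_p$ is the $p$-adic valuation on $\mathbf{Q}$. Fix $\varpi\in\overline{K}$ with $\varpi^{p^f-1}$ a uniformiser; $\omega\colon G_K\to k^\times$ sends $g$ to the reduction of $g(\varpi)/\varpi$. $\Sigma=\mathrm{Hom}_{\mathbf{F}_p}(k,\overline{\mathbf{F}}_p)$, $\varphi(x)=x^p$, $\omega_\tau=\tau\circ\omega$, $\Omega_{\tau,a}=\sum_{i=0}^{f-1}p^ia_{\tau\circ\varphi^i}$. $\chi_1,\chi_2\colon G_K\to\overline{\mathbf{F}}_p^\times$ continuous, $\chi=\chi_1\chi_2^{-1}=\psi\prod_\tau\omega_\tau^{n_\tau}$, $\psi$ unramified, $n_\tau\in[1,p]$, some $n_\tau<p$. Weakly generic: $n_\tau\in[e,p-e]$ for all $\tau$. Serre weight $\sigma_{a,b}=\bigotimes_\tau(\det^{b_\tau}\otimes\mathrm{Sym}^{a_\tau-b_\tau}k^2)\otimes_{k,\tau}\overline{\mathbf{F}}_p$,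 $a_\tau-b_\tau\in[0,p-1]$; $r_\tau=a_\tau-b_\tau+1$. $\mathcal{S}(\chi_1,\chi_2,\sigma)$: pairs $(J,x)$, $J\subseteq\Sigma$, $x_\tau\in[0,e-1]$, with $\chi_1|_{I_K}=\prod_{\tau\in J}\omega_\tau^{a_\tau+1+x_\tau}\prod_{\tau\notin J}\omega_\tau^{b_\tau+x_\tau}$ and $\chi_2|_{I_K}=\prod_{\tau\notin J}\omega_\tau^{a_\tau+e-x_\tau}\prod_{\tau\in J}\omega_\tau^{b_\tau+e-1-x_\tau}$. $s(J,x)_\tau=r_\tau+x_\tau$ if $\tau\in J$, $x_\tau$ if $\tau\notin J$. Order: $(J,x)\preceq(J',x')$ iff $\Omega_{\tau,s(J',x')-s(J,x)}\in(p^f-1)\mathbf{Z}_{\ge0}$ for all $\tau$; a non-empty $\mathcal{S}$ has a unique maximal element. For the maximal $(J,x)$: $s=s(J,x)$, $t_\tau=a_\tau-b_\tau+e-s_\tau$, $\xi_\tau=(p^f-1)s_\tau+\Omega_{\tau,s-t}$. *)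

(* Defs.v *)
From HB Require Import structures.
From mathcomp Require Import all_boot all_order all_algebra.
Set Implicit Arguments.
Unset Strict Implicit.
Unset Printing Implicit Defensive.
Import Order.TTheory GRing.Theory Num.Theory.
Local Open Scope ring_scope.

(* Conventions:
   - Sigma = Hom(k, Fpbar) has f elements; we fix tau_0 and label
     tau_i := tau_0 o phi^i, i : 'I_f.  Then tau_i o phi^j = tau_((i+j) mod f)
     and omega_(tau_i) = omega_(tau_0)^(p^i).
   - A character of G_K restricted to I_K is a power omega_(tau_0)^c, with c
     well defined modulo p^f - 1; we record it by the integer exponent c. *)

Definition at_idx (f : nat) (a : 'I_f -> int) (k : nat) : int :=
  odflt 0 (omap a (insub (k %% f)%N : option 'I_f)).

Definition Omega (p f : nat) (a : 'I_f -> int) (j : 'I_f) : int :=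
  \sum_(i < f) (p ^ i)%:Z * at_idx a (j + i)%N.

(* exponent of omega_(tau_0) representing prod_tau omega_tau^(m_tau) *)
Definition omega_exp (p f : nat) (m : 'I_f -> int) : int :=
  \sum_(i < f) (p ^ i)%:Z * m i.

(* "omega_(tau_0)^c = prod_tau omega_tau^(m_tau)" as characters of I_K *)
Definition charI_eq (p f : nat) (c : int) (m : 'I_f -> int) : Prop :=
  (c = omega_exp p m %[mod ((p ^ f).-1)%:Z])%Z.

Definition r_of (f : nat) (a b : 'I_f -> int) (i : 'I_f) : int := a i - b i + 1.

(* membership of (J, x) in S(chi_1, chi_2, sigma_(a,b)); chi_1|I = omega_(tau_0)^c1,
   chi_2|I = omega_(tau_0)^c2 *)
Definition inS (p e f : nat) (c1 c2 : int) (a b : 'I_f -> int)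
    (J : {set 'I_f}) (x : 'I_f -> nat) : Prop :=
  [/\ forall i, (x i < e)%N,
      charI_eq p c1 (fun i => if i \in J then a i + 1 + (x i)%:Z
                              else b i + (x i)%:Z) &
      charI_eq p c2 (fun i => if i \notin J then a i + e%:Z - (x i)%:Z
                              else b i + e%:Z - 1 - (x i)%:Z)].

Definition s_of (f : nat) (a b : 'I_f -> int) (J : {set 'I_f}) (x : 'I_f -> nat)
    (i : 'I_f) : int :=
  if i \in J then r_of a b i + (x i)%:Z else (x i)%:Z.

Definition preceq (p f : nat) (a b : 'I_f -> int)
    (J : {set 'I_f}) (x : 'I_f -> nat) (J' : {set 'I_f}) (x' : 'I_f -> nat) : Prop :=
  forall j : 'I_f, exists k : nat,
    Omega p (fun i => s_of a b J' x' i - s_of a b J x i) j = ((p ^ f).-1)%:Z * k%:Z.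

Definition t_of (e f : nat) (a b : 'I_f -> int) (J : {set 'I_f}) (x : 'I_f -> nat)
    (i : 'I_f) : int :=
  a i - b i + e%:Z - s_of a b J x i.

Definition xi_of (p e f : nat) (a b : 'I_f -> int) (J : {set 'I_f}) (x : 'I_f -> nat)
    (i : 'I_f) : int :=
  ((p ^ f).-1)%:Z * s_of a b J x i
  + Omega p (fun j => s_of a b J x j - t_of e a b J x j) i.

(* v_p(m) > k for an integer m (with v_p(0) = +oo) *)
Definition vp_gt (p : nat) (m : int) (k : nat) : Prop :=
  m = 0 \/ (k < logn p `|m|)%N.

(* Main.v *)
Require Import Defs.
From HB Require Import structures.
From mathcomp Require Import all_boot all_order all_algebra.
From mathcomp Require Import zify ring lra.
Import Order.TTheory GRing.Theory Num.Theory.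
Set Implicit Arguments.
Unset Strict Implicit.
Unset Printing Implicit Defensive.
Local Open Scope ring_scope.

Definition ix {f : nat} (Hf : (0 < f)%N) (k : nat) : 'I_f := Ordinal (ltn_pmod k Hf).

Lemma at_idxE f (Hf : (0 < f)%N) (a : 'I_f -> int) k : at_idx a k = a (ix Hf k).
Proof.
rewrite /at_idx; case: insubP => [u _ Hu|H] /=.
  by congr a; apply: val_inj.
by rewrite ltn_pmod in H.
Qed.

Lemma ix_ord f (Hf : (0 < f)%N) (i : 'I_f) : ix Hf i = i.
Proof. by apply: val_inj; rewrite /= modn_small. Qed.

Lemma ixDf f (Hf : (0 < f)%N) k : ix Hf (k + f) = ix Hf k.
Proof. by apply: val_inj; rewrite /= modnDr. Qed.

Lemma ix_ixS f (Hf : (0 < f)%N) k : ix Hf (ix Hf k).+1 = ix Hf k.+1.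
Proof. by apply: val_inj; rewrite /= -addn1 modnDml addn1. Qed.

Lemma at_idx_ord f (a : 'I_f -> int) (i : 'I_f) : at_idx a i = a i.
Proof. have Hf : (0 < f)%N by case: i => /= m; case: f {a} => //. 
by rewrite (at_idxE Hf) ix_ord. Qed.

Definition Omn (p f : nat) (a : 'I_f -> int) (j : nat) : int :=
  \sum_(i < f) (p ^ i)%:Z * at_idx a (j + i).

Lemma OmegaE p f a (j : 'I_f) : Omega p a j = Omn p a j.
Proof. by []. Qed.

Lemma predN (p f : nat) : (0 < p)%N -> ((p ^ f).-1)%:Z = (p ^ f)%:Z - 1.
Proof. move=> Hp; have : (0 < p ^ f)%N by rewrite expn_gt0 Hp.
case: (p ^ f)%N => // m _ /=. by rewrite -addn1 PoszD addrK. Qed.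

Lemma telesc p f (Hp : (0 < p)%N) (Hf : (0 < f)%N) (a : 'I_f -> int) j :
  p%:Z * Omn p a j.+1 = Omn p a j + ((p ^ f).-1)%:Z * at_idx a j.
Proof.
rewrite predN //; case: f Hf a => // f' Hf a.
rewrite /Omn mulr_sumr big_ord_recr /= [in RHS]big_ord_recl /=.
have E : at_idx a (j.+1 + f') = at_idx a j.
  by rewrite !(at_idxE Hf) -(ixDf Hf j) addSnnS.
rewrite E addn0; under eq_bigr do rewrite mulrA -PoszM -expnS.
under [X in _ = _ + X + _]eq_bigr do rewrite /bump /= add1n addnS -addSn.
rewrite expn0 mul1r expnS PoszM. ring.
Qed.

Lemma geom (p f : nat) : (p%:Z - 1) * \sum_(i < f) (p ^ i)%:Z = (p ^ f)%:Z - 1.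
Proof.
elim: f => [|f IH]; first by rewrite big_ord0 expn0; ring.
rewrite big_ord_recr /= mulrDr IH expnS PoszM. ring.
Qed.

Lemma Omn_lead p f (Hf : (0 < f)%N) (a : 'I_f -> int) j :
  (p%:Z %| Omn p a j - at_idx a j)%Z.
Proof.
case: f Hf a => // f' Hf a.
rewrite /Omn big_ord_recl /= addn0 expn0 mul1r addrC addKr.
apply: rpred_sum => i _. by rewrite /bump /= add1n expnS PoszM -mulrA dvdz_mulr.
Qed.

Lemma Omn_le p f (a : 'I_f -> int) j c :
  (forall i : 'I_f, a i <= c) -> Omn p a j <= c * \sum_(i < f) (p ^ i)%:Z.
Proof.
move=> H; rewrite /Omn mulr_sumr; apply: ler_sum => i _.
have Hf : (0 < f)%N by case: i => /= m; case: f {a H} => //.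
rewrite (at_idxE Hf) [c * _]mulrC; apply: ler_wpM2l => //; exact: H.
Qed.

Lemma Omn_ge p f (a : 'I_f -> int) j c :
  (forall i : 'I_f, c <= a i) -> c * \sum_(i < f) (p ^ i)%:Z <= Omn p a j.
Proof.
move=> H; rewrite /Omn mulr_sumr; apply: ler_sum => i _.
have Hf : (0 < f)%N by case: i => /= m; case: f {a H} => //.
rewrite (at_idxE Hf) [c * _]mulrC; apply: ler_wpM2l => //; exact: H.
Qed.

Lemma Omn_ge2 p f (Hf : (0 < f)%N) (a : 'I_f -> int) j c :
  (forall i : 'I_f, c <= a i) ->
  at_idx a j + c * (\sum_(i < f) (p ^ i)%:Z - 1) <= Omn p a j.
Proof.
case: f Hf a => // f' Hf a H.
rewrite /Omn [X in _ <= X]big_ord_recl big_ord_recl /= expn0 mul1r addn0 lerD2l.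
have -> : forall x : int, ((1%N)%:Z + x - 1) = x by move=> x; rewrite addrC addKr.
rewrite mulr_sumr.
apply: ler_sum => i _. rewrite (at_idxE Hf) [c * _]mulrC; apply: ler_wpM2l => //; exact: H.
Qed.

Lemma Omn_eq_max p f (Hp : (0 < p)%N) (a : 'I_f -> int) j c :
  (forall i : 'I_f, a i <= c) -> Omn p a j = c * \sum_(i < f) (p ^ i)%:Z ->
  forall i : 'I_f, at_idx a (j + i) = c.
Proof.
move=> H E.
have Hf : forall i : 'I_f, (0 < f)%N by move=> [i /= Hi]; case: f {a H E} Hi.
have E2 : \sum_(i < f) (p ^ i)%:Z * (c - at_idx a (j + i)) = 0.
  under eq_bigr do rewrite mulrBr.
  by rewrite sumrB -mulr_suml mulrC -E /Omn subrr.
move=> i.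
have Hnn : forall k : 'I_f, true -> 0 <= (p ^ k)%:Z * (c - at_idx a (j + k)).
  move=> k _; apply: mulr_ge0 => //; rewrite subr_ge0 (at_idxE (Hf k)); exact: H.
have := psumr_eq0P Hnn E2 (i:=i) isT.
move/eqP; rewrite mulf_eq0 => /orP [|]; last by rewrite subr_eq0 => /eqP.
move=> /eqP; have := expn_gt0 p i; rewrite Hp /=; lia.
Qed.

Lemma at_idx_fun f (a : 'I_f -> int) (F : int -> int) k :
  F 0 = 0 -> at_idx (fun i => F (a i)) k = F (at_idx a k).
Proof. by move=> F0; rewrite /at_idx; case: insub. Qed.

Lemma at_idx_fun2 f (a b : 'I_f -> int) (F : int -> int -> int) k :
  F 0 0 = 0 -> at_idx (fun i => F (a i) (b i)) k = F (at_idx a k) (at_idx b k).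
Proof. by move=> F0; rewrite /at_idx; case: insub. Qed.

Lemma Omn_ext p f (a b : 'I_f -> int) j : (forall i, a i = b i) -> Omn p a j = Omn p b j.
Proof. move=> H; apply: eq_bigr => i _; congr (_ * _); rewrite /at_idx; case: insub => //= u; by rewrite H. Qed.

Lemma Omn_sub p f (a b : 'I_f -> int) j :
  Omn p (fun i => a i - b i) j = Omn p a j - Omn p b j.
Proof.
rewrite /Omn -sumrB; apply: eq_bigr => i _.
by rewrite (@at_idx_fun2 _ a b (fun x y => x - y)) ?subrr // mulrBr.
Qed.

Lemma Omn_scale p f (a : 'I_f -> int) c j :
  Omn p (fun i => c * a i) j = c * Omn p a j.
Proof.
rewrite /Omn mulr_sumr; apply: eq_bigr => i _.
by rewrite (@at_idx_fun _ a (fun x => c * x)) ?mulr0 // mulrCA.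
Qed.

Lemma Omn_shift p f (Hp : (0 < p)%N) (Hf : (0 < f)%N) (m : 'I_f -> int) j :
  Omn p (fun i => p%:Z * m (ix Hf i.+1) - m i) j = ((p ^ f).-1)%:Z * at_idx m j.
Proof.
rewrite (@Omn_sub p f (fun i => p%:Z * m (ix Hf i.+1))) Omn_scale.
have -> : Omn p (fun i : 'I_f => m (ix Hf i.+1)) j = Omn p m j.+1.
  rewrite /Omn. apply: eq_bigr => i _; congr (_ * _).
  by rewrite !(at_idxE Hf) ix_ixS addSn.
by rewrite telesc // addrC addKr.
Qed.

Lemma Omn_dvd p f (Hp : (0 < p)%N) (Hf : (0 < f)%N) (a : 'I_f -> int) :
  (((p ^ f).-1)%:Z %| Omn p a 0)%Z -> forall j, (((p ^ f).-1)%:Z %| Omn p a j)%Z.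
Proof.
move=> H0; elim=> [//|j IH].
have E : Omn p a j.+1 = (p ^ f.-1)%:Z * (Omn p a j + ((p ^ f).-1)%:Z * at_idx a j)
           - ((p ^ f).-1)%:Z * Omn p a j.+1.
  rewrite -telesc // predN // mulrA -PoszM -expnSr prednK //. ring.
rewrite E; apply: rpredB; last exact: dvdz_mulr.
apply: dvdz_mull; apply: rpredD => //; exact: dvdz_mulr.
Qed.

Lemma Omn_per p f (a : 'I_f -> int) j : Omn p a (j + f) = Omn p a j.
Proof.
apply: eq_bigr => i _; congr (_ * _).
have Hf : (0 < f)%N by case: i => /= m; case: f {a} => //.
by rewrite !(at_idxE Hf) addnAC ixDf.
Qed.

Lemma ix_hit f (Hf : (0 < f)%N) j (i0 : 'I_f) : exists i : 'I_f, ix Hf (j + i) = i0.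
Proof.
exists (ix Hf (i0 + (f - j %% f))); apply: val_inj => /=.
rewrite modnDmr {1}(divn_eq j f).
have Hr := ltn_pmod j Hf.
have -> : (j %/ f * f + j %% f + (i0 + (f - j %% f)) = (j %/ f).+1 * f + i0)%N.
  rewrite mulSn; lia.
by rewrite modnMDl modn_small.
Qed.

Lemma ix_inj_S f (Hf : (0 < f)%N) u v : ix Hf u.+1 = ix Hf v.+1 -> ix Hf u = ix Hf v.
Proof.
move/(congr1 val) => /= /eqP H; apply: val_inj => /=; apply/eqP.
by rewrite -(eqn_modDr 1) !addn1.
Qed.

Lemma ix_inj_run f (Hf : (0 < f)%N) k l1 l2 :
  (l1 < f)%N -> (l2 < f)%N -> ix Hf (k + f - l1) = ix Hf (k + f - l2) -> l1 = l2.
Proof.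
move=> H1 H2 /(congr1 val) /= E.
have E2 : (k + f - l1 = k + f - l2)%N.
  move: E; set u := (k + f - l1)%N; set v := (k + f - l2)%N => E.
  have Hu := divn_eq u f; have Hv := divn_eq v f.
  have hu : (u < v + f)%N by rewrite /u /v; lia.
  have hv : (v < u + f)%N by rewrite /u /v; lia.
  move: Hu Hv; rewrite E => Hu Hv.
  set q1 := (u %/ f)%N in Hu; set q2 := (v %/ f)%N in Hv.
  have [h|h|h] := ltngtP q1 q2.
  - have : (q1.+1 * f <= q2 * f)%N by rewrite leq_mul2r h orbT. rewrite mulSn; lia.
  - have : (q2.+1 * f <= q1 * f)%N by rewrite leq_mul2r h orbT. rewrite mulSn; lia.
  - clearbody u v q1 q2; rewrite h in Hu; exact: etrans Hu (esym Hv).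
lia.
Qed.

Lemma m1E f (a b : 'I_f -> int) (J : {set 'I_f}) x i :
  (if i \in J then a i + 1 + (x i)%:Z else b i + (x i)%:Z) = b i + s_of a b J x i.
Proof. rewrite /s_of /r_of; case: (i \in J) => /=; ring. Qed.

Lemma m2E f (e : nat) (a b : 'I_f -> int) (J : {set 'I_f}) x i :
  (if i \notin J then a i + e%:Z - (x i)%:Z else b i + e%:Z - 1 - (x i)%:Z)
  = a i + e%:Z - s_of a b J x i.
Proof. rewrite /s_of /r_of; case: (i \in J) => /=; ring. Qed.

Lemma charI_dvd p f c (m : 'I_f -> int) : charI_eq p c m <-> (((p ^ f).-1)%:Z %| c - omega_exp p m)%Z.
Proof. by rewrite /charI_eq; split => [/eqP|H]; rewrite ?eqz_mod_dvd //; apply/eqP; rewrite eqz_mod_dvd. Qed.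

Lemma inS_move p e f c1 c2 (a b : 'I_f -> int) J x J' x' :
  inS p e c1 c2 a b J x -> (forall i, (x' i < e)%N) ->
  (((p ^ f).-1)%:Z %| \sum_(i < f) (p ^ i)%:Z * (s_of a b J' x' i - s_of a b J x i))%Z ->
  inS p e c1 c2 a b J' x'.
Proof.
have E1 : forall (J : {set 'I_f}) x, omega_exp p (fun i => if i \in J then a i + 1 + (x i)%:Z else b i + (x i)%:Z) = \sum_(i<f) (p^i)%:Z * (b i + s_of a b J x i).
  by move=> J0 x0; apply: eq_bigr => i _; rewrite m1E.
have E2 : forall (J : {set 'I_f}) x, omega_exp p (fun i => if i \notin J then a i + e%:Z - (x i)%:Z else b i + e%:Z - 1 - (x i)%:Z) = \sum_(i<f) (p^i)%:Z * (a i + e%:Z - s_of a b J x i).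
  by move=> J0 x0; apply: eq_bigr => i _; rewrite m2E.
case=> _ H1 H2 Hx' Hd; split => //.
- move: H1; rewrite !charI_dvd !E1 => H1.
  have -> : c1 - \sum_(i < f) (p ^ i)%:Z * (b i + s_of a b J' x' i)
    = (c1 - \sum_(i < f) (p ^ i)%:Z * (b i + s_of a b J x i))
      - \sum_(i < f) (p ^ i)%:Z * (s_of a b J' x' i - s_of a b J x i).
    rewrite -addrA -opprD -big_split /=; congr (_ - _); apply: eq_bigr => i _; ring.
  exact: rpredB.
- move: H2; rewrite !charI_dvd !E2 => H2.
  have -> : c2 - \sum_(i < f) (p ^ i)%:Z * (a i + e%:Z - s_of a b J' x' i)
    = (c2 - \sum_(i < f) (p ^ i)%:Z * (a i + e%:Z - s_of a b J x i))
      + \sum_(i < f) (p ^ i)%:Z * (s_of a b J' x' i - s_of a b J x i).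
    rewrite -addrA; congr (_ + _); rewrite -!sumrN -big_split /=; apply: eq_bigr => i _; ring.
  by rewrite rpredD.
Qed.

Lemma om1E p f (a b : 'I_f -> int) (J : {set 'I_f}) x :
  omega_exp p (fun i => if i \in J then a i + 1 + (x i)%:Z else b i + (x i)%:Z)
  = \sum_(i<f) (p^i)%:Z * (b i + s_of a b J x i).
Proof. by apply: eq_bigr => i _; rewrite m1E. Qed.

Lemma om2E p (e : nat) f (a b : 'I_f -> int) (J : {set 'I_f}) x :
  omega_exp p (fun i => if i \notin J then a i + e%:Z - (x i)%:Z else b i + e%:Z - 1 - (x i)%:Z)
  = \sum_(i<f) (p^i)%:Z * (a i + e%:Z - s_of a b J x i).
Proof. by apply: eq_bigr => i _; rewrite m2E. Qed.


Lemma mulle_aux (a k c : int) : 0 <= a -> k <= c -> a * k <= a * c.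
Proof. by move=> ha hk; apply: ler_wpM2l. Qed.


Lemma claim_arith (p r n s t K : int) : 2 <= p -> 1 <= r <= p -> 1 <= n <= p - 1 ->
  t = r - 1 + 1 - s -> (s = r \/ s = 0) -> s - t - n = p * -2 - K -> -3 <= K ->
  (K = -3 -> p = 2) -> s = 0 /\ (K = -2 -> r = p - 1 \/ r = p) /\ (K <> -2 -> r = p).
Proof.
move=> hp hr hn ht hs hK h3 h3'; subst t; case: hs => hs; rewrite hs in hK *.
- exfalso; lia.
- have [hk|h] := eqVneq K (-3); first by have := h3' hk; lia.
  move/eqP: h => h; lia.
Qed.

Theorem proposition5p12
  (p e f : nat) (Hp : prime p) (He : (0 < e)%N) (Hf : (0 < f)%N)
  (c1 c2 : int) (n : 'I_f -> int)
  (Hn : forall i, 1 <= n i <= p%:Z) (Hnlt : exists i, n i < p%:Z)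
  (Hchi : charI_eq p (c1 - c2) n)
  (Hgen : forall i, e%:Z <= n i <= p%:Z - e%:Z)
  (a b : 'I_f -> int) (Hab : forall i, 0 <= a i - b i <= p%:Z - 1)
  (J : {set 'I_f}) (x : 'I_f -> nat)
  (HS : inS p e c1 c2 a b J x)
  (Hmax : forall (J' : {set 'I_f}) (x' : 'I_f -> nat),
      inS p e c1 c2 a b J' x' -> preceq p a b J x J' x' -> preceq p a b J' x' J x)
  (kappa : 'I_f) (Hk : t_of e a b J x kappa < r_of a b kappa) :
  vp_gt p (xi_of p e a b J x kappa - t_of e a b J x kappa * ((p ^ f).-1)%:Z) 1
  <-> (e = 1%N /\ forall i : 'I_f,
         [/\ r_of a b i = p%:Z, n i = 1 & t_of e a b J x i = 0]).
Proof.
have Hp0 : (0 < p)%N := prime_gt0 Hp.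
have Hp1 : (1 < p)%N := prime_gt1 Hp.
have HNP : ((p ^ f).-1)%:Z = (p ^ f)%:Z - 1 := predN f Hp0.
have Hpf : (p <= p ^ f)%N by rewrite -{1}(expn1 p) leq_pexp2l.
have HS' : (p%:Z - 1) * \sum_(i < f) (p ^ i)%:Z = ((p ^ f).-1)%:Z by rewrite geom HNP.
set N := ((p ^ f).-1)%:Z in HNP HS' Hmax HS Hchi *.
set S := \sum_(i < f) (p ^ i)%:Z in HS'.
have HN : p%:Z - 1 <= N by rewrite HNP; lia.
have HN0 : N != 0 by apply/eqP; lia.
have HS1 : 1 <= S by nia.
have Hx : forall i, (x i < e)%N by case: HS.
set s := s_of a b J x.
set t := t_of e a b J x.
set r := r_of a b.
have Hfact : forall i, [/\ 1 <= r i <= p%:Z, e%:Z <= n i <= p%:Z - e%:Z,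
    t i = r i - 1 + e%:Z - s i &
    (i \in J /\ s i = r i + (x i)%:Z) \/ (i \notin J /\ s i = (x i)%:Z)].
  move=> i; have := Hab i; have := Hgen i.
  rewrite /r /t /s /t_of /s_of /r_of; case: (i \in J) => /= H1 H2; split; try lia.
pose D := fun i => s i - t i.
pose G := fun i => D i - n i.
have HG0 : (N %| Omn p G 0)%Z.
  have -> : Omn p G 0 = \sum_(i < f) (p ^ i)%:Z * G i.
    by apply: eq_bigr => i _; rewrite add0n at_idx_ord.
  case: HS => _; rewrite !charI_dvd om1E om2E -/s => H1 H2.
  move: Hchi; rewrite charI_dvd /omega_exp => H3.
  have -> : \sum_(i < f) (p ^ i)%:Z * G i =
     - (c1 - \sum_(i < f) (p ^ i)%:Z * (b i + s i))
     + (c2 - \sum_(i < f) (p ^ i)%:Z * (a i + e%:Z - s i))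
     + (c1 - c2 - \sum_(i < f) (p ^ i)%:Z * n i).
    have -> : \sum_(i < f) (p ^ i)%:Z * G i =
      \sum_(i < f) (p ^ i)%:Z * (b i + s i) - \sum_(i < f) (p ^ i)%:Z * (a i + e%:Z - s i)
      - \sum_(i < f) (p ^ i)%:Z * n i.
      rewrite -!sumrB; apply: eq_bigr => i _; rewrite /G /D /t /t_of -/s; ring.
    ring.
  by apply: rpredD; [apply: rpredD; [rewrite rpredN; exact: H1 | exact: H2] | exact: H3].
pose K j := (Omn p G j %/ N)%Z.
have HK : forall j, Omn p G j = K j * N.
  by move=> j; rewrite /K divzK //; apply: Omn_dvd.
have KR : forall j, at_idx G j = p%:Z * K j.+1 - K j.
  move=> j; apply: (mulIf HN0); have := telesc Hp0 Hf G j; rewrite !HK => E.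
  rewrite mulrBl -mulrA E; ring.
have HGi : forall i, at_idx G i = G (ix Hf i) by move=> i; rewrite (at_idxE Hf).
have HGup : forall i, G i <= r i - 1.
  move=> i; case: (Hfact i) => H1 H2 H3 H4; have := Hx i; rewrite /G /D; lia.
have HGlo : forall i, - (2 * p%:Z - 1) <= G i.
  move=> i; case: (Hfact i) => H1 H2 H3 H4; have := Hx i; rewrite /G /D; lia.
have HGup' : forall i, G i <= p%:Z - 1.
  by move=> i; case: (Hfact i) => *; have := HGup i; lia.
have Kup : forall j, K j <= 1.
  move=> j.
  have := Omn_le p j HGup'; rewrite HK -/S HS' => H; nia.
have Klo : forall j, - (2 * p%:Z - 1) <= (p%:Z - 1) * K j.
  move=> j; have := Omn_ge p j HGlo; rewrite HK -/S => H.
  have : - (2 * p%:Z - 1) * N <= (p%:Z - 1) * K j * N by rewrite -HS'; nia.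
  move=> H2; nia.
have HQ : xi_of p e a b J x kappa - t kappa * N = p%:Z * Omn p D kappa.+1.
  rewrite telesc // at_idx_ord /xi_of OmegaE -/s -/t -/N /D; ring.
split.
  move=> Hv.
  have Hdv : (p%:Z %| Omn p D kappa.+1)%Z.
    move: Hv; rewrite /vp_gt HQ => [[H0|Hl]].
    - move/eqP: H0; rewrite mulf_eq0 => /orP [/eqP H|/eqP ->]; [lia | by rewrite dvdz0].
    - have Hm : (0 < absz ((p%:Z * Omn p D kappa.+1)%R))%N.
        by move: Hl; case: (absz _) => [|m]; [rewrite logn0|].
      move: Hl; rewrite -pfactor_dvdn // => H2; have : ((p ^ 2)%N%:Z %| p%:Z * Omn p D kappa.+1)%Z by rewrite dvdzE.
      case/dvdzP => q Hq; apply/dvdzP; exists q.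
      have Hpz : p%:Z != 0 by apply/eqP; lia.
      apply: (mulfI Hpz); rewrite Hq expnS expn1 PoszM; ring.
  have HDj : (p%:Z %| at_idx D kappa.+1)%Z.
    have -> : at_idx D kappa.+1 = Omn p D kappa.+1 - (Omn p D kappa.+1 - at_idx D kappa.+1) by ring.
    apply: rpredB => //; exact: Omn_lead.
  set j1 := kappa.+1 in HDj.
  set i1 := ix Hf j1.
  have Hpn : (p%:Z %| n i1 - K j1)%Z.
    have -> : n i1 - K j1 = at_idx D j1 - p%:Z * K j1.+1.
      have E := KR j1; rewrite (at_idxE Hf) /G -/i1 in E.
      rewrite (at_idxE Hf) -/i1; lia.
    by apply: rpredB => //; apply: dvdz_mulr.
  case/dvdzP: Hpn => q Hq.
  have Kj := Kup j1; have := Hgen i1; have := Hn i1 => Hn1 Hg1.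
  have [Hk1|Hkn] : K j1 = 1 \/ K j1 <= -1.
    have [h|[h|h]] : K j1 = 1 \/ K j1 = 0 \/ K j1 <= -1 by lia.
    - by left.
    - exfalso; rewrite h subr0 in Hq; have [hq|hq] : q <= 0 \/ 1 <= q by [lia]; nia.
    - by right.
  - have Hn1' : n i1 = 1 by rewrite Hk1 in Hq; have [hq|hq] : q <= 0 \/ 1 <= q by [lia]; nia.
    have HOm : Omn p G j1 = (p%:Z - 1) * S by rewrite HK Hk1 mul1r HS'.
    have Hmx := Omn_eq_max Hp0 HGup' HOm.
    split; first by lia.
    move=> i0; case: (ix_hit Hf j1 i0) => i Hi.
    have := Hmx i; rewrite (at_idxE Hf) Hi /G /D => HGi0.
    case: (Hfact i0) => *; have := Hx i0; split; lia.

  exfalso.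
  have Hk' : t kappa < r kappa by [].
  have HsK : e%:Z <= s kappa by case: (Hfact kappa) => *; lia.
  have HJk : kappa \in J /\ s kappa = r kappa + (x kappa)%:Z.
    case: (Hfact kappa) => _ _ _ [//|[_ h]]; have := Hx kappa; lia.
  have HGk : at_idx G kappa = G kappa by rewrite at_idx_ord.
  have KRk := KR kappa; rewrite HGk -/j1 in KRk.
  have HGk1 : 1 - n kappa <= G kappa.
    rewrite /G /D; case: (Hfact kappa) => *; case: HJk => _ h; have := Hx kappa; lia.
  have Hge2 := Omn_ge2 p Hf kappa HGlo; rewrite HGk HK -/S in Hge2.
  have HS2 : (p%:Z - 1) * (S - 1) = N - (p%:Z - 1) by rewrite mulrBr HS'; ring.
  have Kk2 : -2 <= K kappa.
    case: (lerP (-2) (K kappa)) => // h; exfalso.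
    have h3 : K kappa <= -3 by lia.
    have := Hgen kappa => hg.
    have A1 : (p%:Z - 1) * (G kappa + - (2 * p%:Z - 1) * (S - 1)) <= (p%:Z - 1) * (K kappa * N).
      apply: ler_wpM2l => //; lia.
    have A2 : (p%:Z - 1) * (K kappa * N) <= (p%:Z - 1) * (-3 * N).
      apply: ler_wpM2l; first lia. apply: ler_wpM2r; lia.
    have A3 : (p%:Z - 1) * (G kappa + - (2 * p%:Z - 1) * (S - 1))
       = (p%:Z - 1) * G kappa - (2 * p%:Z - 1) * (N - (p%:Z - 1)).
      rewrite -HS2; ring.
    have A4 : (p%:Z - 1) * (2 - p%:Z) <= (p%:Z - 1) * G kappa.
      apply: ler_wpM2l; lia.
    have B1 : 0 <= N * (p%:Z - 2) by apply: mulr_ge0; lia.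
    have B2 : 0 < (p%:Z - 1) * (p%:Z + 1) by apply: mulr_gt0; lia.
    rewrite A3 in A1.
    lia.
  have Hgk := Hgen kappa.
  have M1 := mulle_aux (a := p%:Z) (ltac:(lia)) Hkn.
  have He1 : e = 1%N by lia.
  have Kk : K kappa = -2 by lia.
  have Kj1 : K j1 = -1.
    case: (lerP (-1) (K j1)) => h; first by lia.
    have h2 : K j1 <= -2 by lia.
    have := mulle_aux (a := p%:Z) (ltac:(lia)) h2; lia.
  subst e.
  have Hx0 : forall i, x i = 0%N by move=> i; have := Hx i; lia.
  have Hrk : r kappa = 1 /\ s kappa = 1.
    have hx := Hx0 kappa; case: (Hfact kappa) => *; case: HJk => _ h; move: HGk1 KRk; rewrite /G /D => *; lia.
  have HKper : forall j, K (j + f)%N = K j by move=> j; rewrite /K Omn_per.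
  have Hf1 : (1 < f)%N.
    case: (ltnP 1 f) => // h; have Ef : f = 1%N by lia.
    have E2 : (kappa + f)%N = j1 by rewrite /j1; lia.
    have := HKper kappa; rewrite E2 Kj1 Kk => /eqP; lia.
  pose jl l := (kappa + f - l)%N.
  have Hjl0 : K (jl 0%N) = -2 by rewrite /jl subn0 HKper.
  have Hjl0i : ix Hf (jl 0%N) = kappa by rewrite /jl subn0 ixDf ix_ord.
  have HjlS : forall l, (0 < l <= f)%N -> (jl l).+1 = jl l.-1.
    move=> l hl; rewrite /jl; lia.
  have Hjlf : jl f.-1 = j1 by rewrite /jl /j1; lia.
  have Kl3 : forall j, -3 <= K j /\ (K j = -3 -> p%:Z = 2).
    move=> j; have := Klo j => h.
    have h1 : -3 <= K j.
      case: (lerP (-3) (K j)) => // h'; exfalso.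
      have h4 : K j <= -4 by lia.
      have := mulle_aux (a := p%:Z - 1) (ltac:(lia)) h4; lia.
    split => // h2; rewrite h2 in h; lia.
  pose P l := (0 < l)%N && ((K (jl l) != -2) || (r (ix Hf (jl l)) == p%:Z)).
  have HPex : exists l, P l.
    exists f.-1; rewrite /P Hjlf Kj1; apply/andP; split; first lia.
    by apply/orP; left.
  case: (ex_minnP HPex) => L HPL HLmin.
  have HLf : (L <= f.-1)%N.
    apply: HLmin; rewrite /P Hjlf Kj1; apply/andP; split; first lia. by apply/orP; left.
  have HL0 : (0 < L)%N by case/andP: HPL.
  have Hnot : forall l, (0 < l < L)%N -> K (jl l) = -2 /\ r (ix Hf (jl l)) != p%:Z.
    move=> l /andP [h1 h2].
    have : ~~ P l by apply/negP => hp; have := HLmin _ hp; lia.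
    rewrite /P h1 /= negb_or negbK => /andP [/eqP -> ->]; done.
  have Hclaim : forall l, (0 < l <= L)%N ->
     [/\ s (ix Hf (jl l)) = 0, ix Hf (jl l) \notin J,
         (l < L)%N -> r (ix Hf (jl l)) = p%:Z - 1 & l = L -> r (ix Hf (jl l)) = p%:Z].
    move=> l hl.
    have Kprev : K (jl l.-1) = -2.
      case: (ltnP 1 l) => h.
      - by case: (Hnot l.-1 ltac:(lia)).
      - have -> : l.-1 = 0%N by lia. exact: Hjl0.
    have KRl := KR (jl l); rewrite HjlS in KRl; last by lia.
    rewrite Kprev HGi in KRl.
    set i := ix Hf (jl l) in KRl *.
    case: (Hfact i) => h1 h2 h3 h4.
    have hs : s i = r i \/ s i = 0.
      by case: h4 => [[_ ->]|[_ ->]]; rewrite Hx0 ?addr0; [left|right].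
    have hp2 : 2 <= p%:Z by lia.
    rewrite /G /D in KRl.
    have [hs0 [hA hB]] := claim_arith hp2 h1 h2 h3 hs KRl (Kl3 (jl l)).1 (Kl3 (jl l)).2.
    have hJ : i \notin J.
      apply/negP => hJ; case: h4 => [[_ h]|[h _]]; last by rewrite hJ in h.
      move: h; rewrite Hx0 hs0 => /eqP; case/andP: h1 => h1 _; lia.
    split => //.
    - move=> hlt; case: (Hnot l ltac:(lia)) => hK /eqP hr.
      by case: (hA hK).
    - move=> hL; move: HPL; rewrite -hL /P => /andP [_ /orP [/eqP hK|/eqP //]].
      exact: hB.
  pose inL i := [exists l : 'I_f, (0 < l <= L)%N && (ix Hf (jl l) == i)].
  pose inM i := [exists l : 'I_f, (l < L)%N && (ix Hf (jl l) == i)].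
  pose J' := [set i | ((i \in J) && (i != kappa)) || inL i].
  pose m : 'I_f -> int := fun i => if inM i then 1 else 0.
  pose s' := s_of a b J' x.
  have HLf' : forall l, (l <= L)%N -> (l < f)%N by move=> l hl; lia.
  have Hinj : forall l1 l2, (l1 <= L)%N -> (l2 <= L)%N -> ix Hf (jl l1) = ix Hf (jl l2) -> l1 = l2.
    move=> l1 l2 h1 h2; apply: ix_inj_run; exact: HLf'.
  have HinLP : forall i, reflect (exists l, (0 < l <= L)%N /\ ix Hf (jl l) = i) (inL i).
    move=> i; apply: (iffP existsP) => [[l /andP [h /eqP <-]]|[l [h <-]]].
    - by exists l.
    - have hl : (l < f)%N by apply: HLf'; case/andP: h.
      by exists (Ordinal hl); rewrite /= h eqxx.
  have HinMP : forall i, reflect (exists l, (l < L)%N /\ ix Hf (jl l) = i) (inM i).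
    move=> i; apply: (iffP existsP) => [[l /andP [h /eqP <-]]|[l [h <-]]].
    - by exists l.
    - have hl : (l < f)%N by apply: HLf'; apply: ltnW.
      by exists (Ordinal hl); rewrite /= h eqxx.
  have HMS : forall i : 'I_f, inM (ix Hf i.+1) = inL i.
    move=> i; apply/HinMP/HinLP => [[l [hl E]]|[l [hl E]]].
    - exists l.+1; split; first by apply/andP.
      rewrite -[RHS](ix_ord Hf); apply: ix_inj_S.
      rewrite HjlS /=; first by rewrite E.
      by apply: HLf'; apply: ltnW.
    - exists l.-1; split.
        by case/andP: hl => h1 h2; rewrite prednK // (leq_trans _ h2).
      rewrite -E ix_ixS HjlS //; case/andP: hl => h1 h2; rewrite h1 /=.
      by apply: (leq_trans h2); apply: (leq_trans HLf); apply: leq_pred.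
  have HsE : forall (J0 : {set 'I_f}) i, s_of a b J0 x i = if i \in J0 then r i else 0.
    by move=> J0 i; rewrite /s_of Hx0 addr0.
  have HinMk : inM kappa.
    by apply/HinMP; exists 0%N; split => //; exact: Hjl0i.
  have Hdelta : forall i, s' i - s i = p%:Z * m (ix Hf i.+1) - m i.
    move=> i; rewrite /m HMS /s' /s !HsE.
    case: (HinLP i) => [[l [hl E]]|hnL].
    - have hJ' : i \in J' by rewrite inE; apply/orP; right; apply/HinLP; exists l.
      case: (Hclaim l hl); rewrite E => hs0 hnJ hlt hLeq.
      rewrite hJ' (negbTE hnJ).
      case: (ltnP l L) => hlL.
      + have -> : inM i by apply/HinMP; exists l.
        by rewrite (hlt hlL); ring.
      + have hlL' : l = L by case/andP: hl => _ h2; apply/eqP; rewrite eqn_leq h2 hlL.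
        have -> : inM i = false.
          case: (HinMP i) => // -[l' [hl' E']]; exfalso.
          have := Hinj l' l (ltnW hl') (ltac:(by case/andP: hl)); rewrite E E' => /(_ erefl).
          by move=> h; rewrite h ltnNge hlL in hl'.
        by rewrite (hLeq hlL'); ring.
    - have hnL' : inL i = false by case: (HinLP i) hnL => // h1 h2; case: (h2 h1).
      case: (eqVneq i kappa) => [Ei|hik].
      + rewrite Ei in hnL' *. rewrite HinMk.
        have -> : kappa \in J' = false by rewrite inE eqxx andbF hnL'.
        case: HJk => -> _; case: Hrk => -> _; ring.
      + have -> : inM i = false.
          case: (HinMP i) => // -[l' [hl' E']]; exfalso.
          case: (posnP l') => hl0.
          * by move: E'; rewrite hl0 Hjl0i => Ek; rewrite Ek eqxx in hik.
          * by apply: hnL; exists l'; split => //; rewrite hl0 ltnW.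
        have -> : i \in J' = (i \in J) by rewrite inE hik andbT hnL' orbF.
        case: (i \in J); ring.
  have Hsh : forall j, Omn p (fun i => s' i - s i) j = N * at_idx m j.
    move=> j; rewrite (@Omn_ext p f _ (fun i => p%:Z * m (ix Hf i.+1) - m i)).
      exact: Omn_shift.
    exact: Hdelta.
  have HinS' : inS p 1 c1 c2 a b J' x.
    apply: (inS_move HS Hx).
    have -> : \sum_(i < f) (p ^ i)%:Z * (s_of a b J' x i - s_of a b J x i)
        = Omn p (fun i => s' i - s i) 0.
      by apply: eq_bigr => i _; rewrite add0n at_idx_ord.
    by rewrite Hsh; apply: dvdz_mulr.
  have Hprec : preceq p a b J x J' x.
    move=> j; exists (if inM j then 1%N else 0%N); rewrite OmegaE.
    change (Omn p (fun i => s' i - s i) j = N * (if inM j then 1%N else 0%N)%:Z).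
    by rewrite Hsh at_idx_ord /m; case: (inM j).
  have [k Hk2] := Hmax J' x HinS' Hprec kappa.
  have Hneg : Omn p (fun i => s i - s' i) kappa = - N.
    rewrite (@Omn_ext p f _ (fun i => -1 * (s' i - s i))); last by move=> i; ring.
    by rewrite Omn_scale Hsh at_idx_ord /m HinMk; ring.
  have : N * (k%:Z + 1) = 0.
    rewrite OmegaE in Hk2.
    change (Omn p (fun i => s i - s' i) kappa = N * k%:Z) in Hk2.
    rewrite mulrDr mulr1 -Hk2 Hneg; ring.
  move/eqP; rewrite mulf_eq0 (negbTE HN0) /=; lia.
case=> He1 Hall.
have HD : forall i, D i = p%:Z.
  move=> i; case: (Hall i) (Hfact i) => H1 H2 H3 [] *; rewrite /D; lia.
have HOD : Omn p D kappa.+1 = p%:Z * S.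
  rewrite /Omn /S mulr_sumr; apply: eq_bigr => i _; rewrite (at_idxE Hf) HD mulrC //.
rewrite /vp_gt HQ HOD mulrA; right.
have HQ0 : (0 < absz ((p%:Z * p%:Z * S)%R))%N by rewrite absz_gt0; apply/eqP; nia.
rewrite -pfactor_dvdn //.
have H2 : ((p ^ 2)%N%:Z %| p%:Z * p%:Z * S)%Z by rewrite expnS expn1 PoszM dvdz_mulr.
by move: H2; rewrite dvdzE.
Qed.
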